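(* Let $\mathfrak{h}$ be a Lie algebra with bracket $[\cdot,\cdot]$ and $\mathfrak{t}$ a Lie subalgebra. Then the maximal Lie subalgebra of $\mathfrak{h}$ which is invariant under the contraction along $\mathfrak{t}$ is isomorphic to a sum $\mathfrak{t}+\mathfrak{s}$ of $\mathfrak{t}$ and an Abelian subalgebra $\mathfrak{s}$ of $\mathfrak{h}$ with $[\mathfrak{t},\mathfrak{s}]\subset\mathfrak{s}$. The sum is not necessarily direct.
   Context: Contraction: choose a vector subspace $\mathfrak{t}^c$ complementary to $\mathfrak{t}$, so every $X\in\mathfrak{h}$ is uniquely $X_{\mathfrak{t}}+X_{\mathfrak{t}^c}$; set $\phi_\varepsilon(X)=X_{\mathfrak{t}}+\varepsilon X_{\mathfrak{t}^c}$ for $\varepsilon>0$. The contraction of $\mathfrak{h}$ along $\mathfrak{t}$ is the vector space of $\mathfrak{h}$ with bracket $[X,Y]'=\lim_{\varepsilon\to0}\phi_\varepsilon^{-1}([\phi_\varepsilon(X),\phi_\varepsilon(Y)])$. A Lie subalgebra $\mathfrak{a}\subset\mathfrak{h}$ is invariant under the contraction if $[X,Y]'=[X,Y]$ for all $X,Y\in\mathfrak{a}$ (so that $\mathfrak{a}$ is a Lie subalgebra of both with the same bracket). *)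

(* Defs.v *)
From HB Require Import structures.
From mathcomp Require Import all_boot all_order all_algebra.
From mathcomp Require Import all_classical all_reals all_analysis.
Set Implicit Arguments. Unset Strict Implicit. Unset Printing Implicit Defensive.
Import Order.TTheory GRing.Theory Num.Theory.
Import numFieldNormedType.Exports.
Local Open Scope classical_set_scope.
Local Open Scope ring_scope.

Section LieDefs.
Variables (R : realType) (h : normedModType R).

Definition lie_bracket (br : h -> h -> h) : Prop :=
  [/\ (forall (a : R) x y z, br (a *: x + y) z = a *: br x z + br y z),
      (forall (a : R) x y z, br x (a *: y + z) = a *: br x y + br x z),
      (forall x, br x x = 0) &
      (forall x y z, br x (br y z) + br y (br z x) + br z (br x y) = 0)].

Definition subspace (S : set h) : Prop :=
  S 0 /\ (forall (a : R) x y, S x -> S y -> S (a *: x + y)).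

Definition lie_subalgebra (br : h -> h -> h) (S : set h) : Prop :=
  subspace S /\ (forall x y, S x -> S y -> S (br x y)).

Definition abelian (br : h -> h -> h) (S : set h) : Prop :=
  forall x y, S x -> S y -> br x y = 0.

Definition complementary (t tc : set h) : Prop :=
  [/\ subspace tc,
      (forall x, exists a b, [/\ t a, tc b & x = a + b]) &
      (forall x, t x -> tc x -> x = 0)].

Definition comp_t (t tc : set h) (X : h) : h :=
  xget 0 [set a | t a /\ tc (X - a)].

Definition phi (t tc : set h) (eps : R) (X : h) : h :=
  comp_t t tc X + eps *: (X - comp_t t tc X).

Definition phi_inv (t tc : set h) (eps : R) (Y : h) : h :=
  comp_t t tc Y + eps^-1 *: (Y - comp_t t tc Y).

Definition contr_bracket (br : h -> h -> h) (t tc : set h) (X Y : h) : h :=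
  lim ((fun eps : R => phi_inv t tc eps (br (phi t tc eps X) (phi t tc eps Y)))
         @ at_right (0 : R)).

Definition contr_invariant (br : h -> h -> h) (t tc : set h) (A : set h) : Prop :=
  lie_subalgebra br A /\
  (forall X Y, A X -> A Y -> contr_bracket br t tc X Y = br X Y).

End LieDefs.

(* Main.v *)
Require Import Defs.
From HB Require Import structures.
From mathcomp Require Import all_boot all_order all_algebra.
From mathcomp Require Import all_classical all_reals all_analysis.
Import Order.TTheory GRing.Theory Num.Theory.
Import numFieldNormedType.Exports.
Local Open Scope classical_set_scope.
Local Open Scope ring_scope.

Section Aux.
Variables (R : realType) (h : normedModType R) (t tc : set h).
Hypothesis Ht : Defs.subspace t.
Hypothesis Hc : complementary t tc.

Let Hsc : forall (a : R) x y, tc x -> tc y -> tc (a *: x + y).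
Proof. by case: Hc => [[]]. Qed.
Let Hc0 : tc 0.
Proof. by case: Hc => [[]]. Qed.
Let Hz : forall x, t x -> tc x -> x = 0.
Proof. move: Hc; rewrite /complementary; case=> _ _ H; exact: H. Qed.
Let Hts : forall (a : R) x y, t x -> t y -> t (a *: x + y).
Proof. move: Ht; rewrite /Defs.subspace; case=> _ H; exact: H. Qed.
Let Ht0 : t 0.
Proof. move: Ht; rewrite /Defs.subspace; by case. Qed.

Lemma comp_spec X : t (comp_t t tc X) /\ tc (X - comp_t t tc X).
Proof.
rewrite /comp_t; apply: (xgetPex 0 (P := [set a | t a /\ tc (X - a)])).
case: Hc => _ /(_ X) [a [b [ta tb ->]]] _.
by exists a; split => //; rewrite addrAC subrr add0r.
Qed.

Lemma comp_uniq X a : t a -> tc (X - a) -> comp_t t tc X = a.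
Proof.
move=> ta tca; have [tc' tcc] := comp_spec X.
apply/eqP; rewrite -subr_eq0; apply/eqP; apply: Hz.
  by rewrite addrC -scaleN1r; apply: Hts.
have -> : comp_t t tc X - a = (-1) *: (X - comp_t t tc X) + (X - a).
  by rewrite scaleN1r opprB addrA subrK.
by apply: Hsc.
Qed.

Lemma comp_scale k X : comp_t t tc (k *: X) = k *: comp_t t tc X.
Proof.
have [tc' tcc] := comp_spec X.
apply: comp_uniq.
  by rewrite -[_ *: _]addr0; apply: Hts.
by rewrite -scalerBr -[_ *: _]addr0; apply: Hsc.
Qed.

Lemma comp_t_in X : t X -> comp_t t tc X = X.
Proof.
move=> tX; apply: comp_uniq => //; by rewrite subrr.
Qed.

Lemma comp_tc_in X : tc X -> comp_t t tc X = 0.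
Proof.
move=> cX; apply: comp_uniq => //.
by rewrite subr0.
Qed.

Lemma lim_right (f : R -> h) (g : R -> h) l :
  (forall e, 0 < e -> f e = g e) -> g x @[x --> 0%R] --> l ->
  lim (f x @[x --> 0^'+]) = l.
Proof.
move=> fg gl; apply: cvg_lim => //.
apply: cvg_trans; last exact: (cvg_at_right_filter gl).
apply: near_eq_cvg; near=> e; rewrite fg //.
Unshelve. all: by end_near.
Qed.

End Aux.

Lemma L1 (R : realType) (h : normedModType R) (a b : h) :
  (e * e) *: a + e *: b @[e --> (0:R)] --> (0:h).
Proof.
have F := @nbhs_filter R 0.
rewrite -[W in _ --> W](addr0 (0:h)).
apply: (cvgD (F := nbhs (0:R))).
  rewrite -(scale0r a); apply: (cvgZ (F := nbhs (0:R))); last exact: cvg_cst.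
  rewrite -[W in _ --> W](mulr0 (0:R)); exact: (cvgM cvg_id cvg_id).
rewrite -(scale0r b); apply: (cvgZ (F := nbhs (0:R))); [exact: cvg_id | exact: cvg_cst].
Qed.
Lemma L2 (R : realType) (h : normedModType R) (a b : h) :
  e *: a + b @[e --> (0:R)] --> b.
Proof.
rewrite -[W in _ --> W]add0r.
apply: (cvgD (F := nbhs (0:R))); last exact: cvg_cst.
rewrite -(scale0r a); apply: (cvgZ (F := nbhs (0:R))); [exact: cvg_id | exact: cvg_cst].
Qed.

Lemma br_x0 (R : realType) (h : normedModType R) (br : h -> h -> h) :
  lie_bracket br -> forall x, br x 0 = 0.
Proof.
case=> _ H2 _ _ x; have := H2 1 x 0 0.
rewrite !scale1r addr0 => E; apply: (@addrI _ (br x 0)); rewrite addr0; exact: esym.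
Qed.

Lemma br_scale_r (R : realType) (h : normedModType R) (br : h -> h -> h) :
  lie_bracket br -> forall (a : R) x y, br x (a *: y) = a *: br x y.
Proof.
move=> Hb a x y; have [_ H2 _ _] := Hb.
by have := H2 a x y 0; rewrite (@br_x0 _ _ _ Hb) !addr0.
Qed.

Lemma br_scale_l (R : realType) (h : normedModType R) (br : h -> h -> h) :
  lie_bracket br -> forall (a : R) x y, br (a *: x) y = a *: br x y.
Proof.
move=> Hb a x y; have [H1 _ _ _] := Hb.
have H0 : br 0 y = 0.
  have := H1 1 0 0 y; rewrite !scale1r addr0 => E; apply: (@addrI _ (br 0 y)); rewrite addr0; exact: esym.
by have := H1 a x 0 y; rewrite !addr0 H0 addr0.
Qed.

Theorem propositionA1 (R : realType) (h : normedModType R) (br : h -> h -> h)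
    (t tc : set h) :
  lie_bracket br -> lie_subalgebra br t -> complementary t tc ->
  forall A : set h,
    contr_invariant br t tc A -> t `<=` A ->
    (forall B : set h, contr_invariant br t tc B -> t `<=` B -> A `<=` B -> B = A) ->
    exists s : set h,
      [/\ lie_subalgebra br s, abelian br s,
          (forall x y, t x -> s y -> s (br x y)) &
          A = [set x + y | x in t & y in s]].
Proof.
move=> Hb [Ht Htb] Hc A [[HA HAb] Hinv] tA _.
have Hcs : Defs.subspace tc by case: Hc.
have cspec := comp_spec _ _ _ _ Hc.
have ctc := comp_tc_in _ _ _ _ Ht Hc.
have ctt := comp_t_in _ _ _ _ Ht Hc.
have csc := comp_scale _ _ _ _ Ht Hc.
have bl := br_scale_l _ _ _ Hb.
have brr := br_scale_r _ _ _ Hb.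
have Hcc : forall X Y, tc X -> tc Y -> contr_bracket br t tc X Y = 0.
  move=> X Y cX cY; rewrite /contr_bracket.
  set Z := br X Y.
  apply: (@lim_right _ _ _ (fun e => (e * e) *: comp_t t tc Z + e *: (Z - comp_t t tc Z))).
    move=> e e0; rewrite /phi /phi_inv (ctc _ cX) (ctc _ cY) !subr0 !add0r.
    rewrite bl brr scalerA csc.
    by rewrite -scalerBr scalerA mulrA mulVf ?gt_eqF // mul1r.
  exact: L1.
have Htc : forall x y, t x -> tc y -> contr_bracket br t tc x y = br x y - comp_t t tc (br x y).
  move=> x y tx cy; rewrite /contr_bracket.
  set Z := br x y.
  apply: (@lim_right _ _ _ (fun e => e *: comp_t t tc Z + (Z - comp_t t tc Z))).
    move=> e e0; rewrite /phi /phi_inv (ctt _ tx) (ctc _ cy) subrr scaler0 addr0.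
    rewrite subr0 add0r brr csc.
    by rewrite -scalerBr scalerA mulVf ?gt_eqF // scale1r.
  exact: L2.
have Hab : abelian br (A `&` tc).
  move=> X Y [AX cX] [AY cY]; by rewrite -Hinv // Hcc.
exists (A `&` tc); split => //.
- split.
    split; first by split; [case: HA | case: Hcs].
    move=> a x y [Ax cx] [Ay cy]; split; [by case: HA => _ H; apply: H|by case: Hcs => _ H; apply: H].
  move=> x y sx sy; rewrite Hab //; split; [by case: HA | by case: Hcs].
- move=> x y tx [Ay cy]; split; first by apply: HAb => //; exact: tA.
  have := Hinv x y (tA _ tx) Ay; rewrite Htc // => E.
  have E2 : comp_t t tc (br x y) = 0.
    by move/eqP: E; rewrite -subr_eq0 addrAC subrr add0r oppr_eq0 => /eqP.
  by have [_] := cspec (br x y); rewrite E2 subr0.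
- apply/seteqP; split => X.
    move=> AX; have [tX cX] := cspec X.
    exists (comp_t t tc X) => //; exists (X - comp_t t tc X); last by rewrite addrC subrK.
    split => //; rewrite addrC -scaleN1r; case: HA => _ H; apply: H => //; exact: tA.
  case=> x tx [y [Ay _] <-]; rewrite -[x]scale1r; case: HA => _ H; apply: H => //; exact: tA.
Qed.
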